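(* Let $q\geqslant 3$ be a prime power and $s\in\mathbb{Z}_{\geqslant 1}$. Then the non-fixed c-Wieferich primes in $\mathbb{F}_q[T]$ of degree $s$ are precisely the monic irreducible factors over $\mathbb{F}_q$ of the polynomials $R_{q,s,\alpha}=\prod_{i=1}^s(T^q-T-\alpha^{q^i})$ for $\alpha\in B_{q,s,0}$.
   Context: Carlitz module: for $N\in\mathbb{F}_q[T]$, $\rho_N(X)$ is the additive polynomial determined by requiring $N\mapsto\rho_N$ to be an $\mathbb{F}_q$-algebra homomorphism from $\mathbb{F}_q[T]$ to the ring of additive polynomials (multiplication = composition) with $\rho_T(X)=X^q+TX$. A monic irreducible $\mathcal{P}\in\mathbb{F}_q[T]$ is a c-Wieferich prime if $\rho_{\mathcal{P}-1}(1)\equiv0\pmod{\mathcal{P}^2}$ (known to be equivalent to $F_{\deg\mathcal{P}-1}\equiv0\pmod{\mathcal{P}}$), where $F_0=1$, $F_i=(-1)^i+(T^{q^i}-T)F_{i-1}$. A polynomial $f\in\mathbb{F}_q[T]$ is non-fixed if $f(T+a)=f(T)$ holds only for $a=0\in\mathbb{F}_q$. $B_{q,s,0}$ is the set of equivalence classes (under $\theta_1\sim\theta_2$ iff $\theta_1^{q^i}=\theta_2$ for some $i\geqslant0$) of elements $\alpha\in\mathbb{F}_{q^s}$ of degree $s$ over $\mathbb{F}_q$ with $\mathrm{Tr}_{\mathbb{F}_{q^s}/\mathbb{F}_q}(\alpha)=0$ and $F_{s-1}\equiv0\pmod{T^q-T-\alpha}$ in $\mathbb{F}_{q^s}[T]$.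 *)

(* Defs.v *)
From HB Require Import structures.
From mathcomp Require Import all_boot all_order all_algebra all_field.
Set Implicit Arguments. Unset Strict Implicit. Unset Printing Implicit Defensive.
Import GRing.Theory.
Local Open Scope ring_scope.

(* Since N |-> rho_N is the
   F_q-algebra homomorphism into additive polynomials under composition,
   evaluating rho_N at x is exactly this sum of iterates. *)
Definition carlitzT (F : finFieldType) (x : {poly F}) : {poly F} :=
  x ^+ #|F| + 'X * x.

Definition carlitz (F : finFieldType) (N x : {poly F}) : {poly F} :=
  \sum_(i < size N) N`_i *: iter i (@carlitzT F) x.

Definition c_wieferich (F : finFieldType) (P : {poly F}) : Prop :=
  [/\ P \is monic, irreducible_poly P & P ^+ 2 %| carlitz (P - 1) 1].

Definition non_fixed (F : finFieldType) (P : {poly F}) : Prop :=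
  forall a : F, P \Po ('X + a%:P) = P -> a = 0.

Fixpoint Fseq (R : comNzRingType) (q i : nat) : {poly R} :=
  match i with
  | 0 => 1
  | i'.+1 => (-1) ^+ i'.+1 + ('X ^+ (q ^ i'.+1) - 'X) * Fseq R q i'
  end.

Definition trace_q (L : fieldType) (q s : nat) (alpha : L) : L :=
  \sum_(i < s) alpha ^+ (q ^ i).

Definition Rpoly (L : fieldType) (q s : nat) (alpha : L) : {poly L} :=
  \prod_(1 <= i < s.+1) ('X ^+ q - 'X - (alpha ^+ (q ^ i))%:P).

(* Main.v *)
Require Import Defs.
From HB Require Import structures.
From mathcomp Require Import all_boot all_order all_algebra all_field ring.
Import GRing.Theory.
Local Open Scope ring_scope.
Set Warnings "-notation-overridden -ambiguous-paths".
Section Frob.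
Variable F : finFieldType.
Local Notation q := #|F|.

Lemma pnat_q k : [pchar F].-nat (q ^ k)%N.
Proof.
have [p pp pc] := finPcharP F.
have cq : q = (p ^ logn p q)%N by have := card_pprimeChar pc.
rewrite cq -expnM pnatX (eq_pnat _ (pcharf_eq pc)) pnat_id ?orbT //.
Qed.

Lemma frobD (R : comNzRingType) (hR : [pchar R] =i [pchar F]) k (x y : R) :
  (x + y) ^+ (q ^ k) = x ^+ (q ^ k) + y ^+ (q ^ k).
Proof. by apply: exprDn_pchar; rewrite (eq_pnat _ hR) pnat_q. Qed.

Lemma frobN (R : comNzRingType) (hR : [pchar R] =i [pchar F]) k (x : R) :
  (- x) ^+ (q ^ k) = - x ^+ (q ^ k).
Proof. by apply: exprNn_pchar; rewrite (eq_pnat _ hR) pnat_q. Qed.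

Lemma frobB (R : comNzRingType) (hR : [pchar R] =i [pchar F]) k (x y : R) :
  (x - y) ^+ (q ^ k) = x ^+ (q ^ k) - y ^+ (q ^ k).
Proof. by rewrite frobD // frobN. Qed.

Lemma frob_sum (R : comNzRingType) (hR : [pchar R] =i [pchar F]) k
   (I : Type) (r : seq I) (P : pred I) (G : I -> R) :
  (\sum_(i <- r | P i) G i) ^+ (q ^ k) = \sum_(i <- r | P i) G i ^+ (q ^ k).
Proof.
elim/big_rec2: _ => [|i a b _ <-]; first by rewrite expr0n expn_eq0 gtn_eqF ?(ltn_trans _ (finNzRing_gt1 F))...
by rewrite frobD.
Qed.

Lemma frobF k (c : F) : c ^+ (q ^ k) = c.
Proof. by elim: k => [|k IH]; rewrite ?expr1 // expnSr exprM IH expf_card. Qed.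

Lemma frob_iter k l (R : comNzRingType) (x : R) : (x ^+ (q ^ k)) ^+ (q ^ l) = x ^+ (q ^ (k + l)).
Proof. by rewrite -exprM -expnD. Qed.

Lemma pcharP : [pchar {poly F}] =i [pchar F].
Proof. exact: pchar_poly. Qed.

End Frob.
Section Carlitz.
Variable F : finFieldType.
Local Notation q := #|F|.
Local Notation hP := (@pchar_poly F).

Lemma q_gt1 : (1 < q)%N. Proof. exact: finNzRing_gt1. Qed.

Lemma frobq_D (x y : {poly F}) : (x + y) ^+ q = x ^+ q + y ^+ q.
Proof. by have := @frobD F _ hP 1 x y; rewrite expn1. Qed.
Lemma frobq_B (x y : {poly F}) : (x - y) ^+ q = x ^+ q - y ^+ q.
Proof. by have := @frobB F _ hP 1 x y; rewrite expn1. Qed.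
Lemma frobq_sum I (r : seq I) (G : I -> {poly F}) :
  (\sum_(i <- r) G i) ^+ q = \sum_(i <- r) G i ^+ q.
Proof. by have := @frob_sum F _ hP 1 _ r xpredT G; rewrite expn1. Qed.
Lemma frobq_Z (c : F) (x : {poly F}) : (c *: x) ^+ q = c *: x ^+ q.
Proof. by rewrite -!mul_polyC exprMn -polyC_exp expf_card. Qed.

Fixpoint ec (i j : nat) : {poly F} :=
  match i with
  | 0 => (j == 0)%:R
  | i'.+1 => 'X * ec i' j + (if j is j'.+1 then ec i' j' ^+ q else 0)
  end.

Lemma ec_gt i j : (i < j)%N -> ec i j = 0.
Proof.
elim: i j => [|i IH] [|j] //= ij.
by rewrite !IH ?mulr0 ?add0r ?expr0n //= ?(ltnW ij) // gtn_eqF // ltnW // q_gt1.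
Qed.

Lemma ec_ii i : ec i i = 1.
Proof. by elim: i => //= i IH; rewrite ec_gt // mulr0 add0r IH expr1n. Qed.

Lemma ec_i0 i : ec i 0 = 'X^i.
Proof. by elim: i => //= i IH; rewrite addr0 IH exprS. Qed.

Lemma citer i M : (i < M)%N -> iter i (@carlitzT F) 1 = \sum_(j < M) ec i j.
Proof.
move=> iM; have -> : \sum_(j < M) ec i j = \sum_(j < i.+1) ec i j.
  elim: M iM => // M IH; rewrite ltnS leq_eqVlt => /orP[/eqP <- //|iM].
  by rewrite big_ord_recr /= ec_gt // addr0 IH.
elim: i {iM} => [|i IH]; first by rewrite big_ord1.
rewrite iterS IH /carlitzT frobq_sum mulr_sumr.
rewrite [in RHS]big_ord_recr /= ec_gt // mulr0 add0r ec_ii expr1n.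
rewrite big_split /= -addrA [LHS]addrC; congr (_ + _).
rewrite [X in _ = X + _]big_ord_recl /= add0r [LHS]big_ord_recr /= ec_ii expr1n; congr (_ + _).
Qed.

Lemma ec_S i j : ec i.+1 j = 'X * ec i j + (if j is j'.+1 then ec i j' ^+ q else 0).
Proof. by []. Qed.

Lemma ec_comm i j :
  ec i.+1 j = 'X^(q ^ j) * ec i j + (if j is j'.+1 then ec i j' else 0).
Proof.
elim: i j => [|i IH] [|k].
- by rewrite expn0 expr1 /= !addr0.
- rewrite ec_S /=; case: (k == 0); rewrite ?expr1n ?expr0n ?gtn_eqF ?(ltnW q_gt1) //;
  by rewrite !mulr0.
- by rewrite !ec_i0 expn0 expr1 addr0 -exprS.
rewrite ec_S [in RHS]ec_S [in RHS](ec_S i k) !IH.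
case: k => [|k].
  rewrite !addr0 !expn0 !expr1 expn1 exprMn.
move: (ec i 1) (ec i 0) => a b; ring.
rewrite frobq_D !exprMn -exprM -expnSr.
move: (ec i k.+2) (ec i k.+1) (ec i k) ('X^(#|F| ^ k.+2)) => a b c Y; ring.
Qed.

Lemma ec_rel i j :
  ('X^(q ^ j.+1) - 'X) * ec i j.+1 = ec i j ^+ q - ec i j.
Proof.
have := ec_comm i j.+1; rewrite ec_S => /eqP; rewrite -subr_eq0 => /eqP e.
rewrite -[RHS]subr0 -e.
move: (ec i j.+1) (ec i j) ('X^(#|F| ^ j.+1)) => a b Y; ring.
Qed.
End Carlitz.

Section Wief.
Variable F : finFieldType.
Local Notation q := #|F|.

Definition ac (N : {poly F}) j := \sum_(i < size N) N`_i *: ec F i j.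

Lemma carlitzE N : carlitz N 1 = \sum_(j < size N) ac N j.
Proof.
rewrite /carlitz /ac (exchange_big_dep xpredT) //=; apply: eq_bigr => i _.
by rewrite (@citer F _ _ (ltn_ord i)) scaler_sumr.
Qed.

Lemma ac_rel N j : ('X^(q ^ j.+1) - 'X) * ac N j.+1 = ac N j ^+ q - ac N j.
Proof.
rewrite /ac mulr_sumr frobq_sum -sumrB; apply: eq_bigr => i _.
by rewrite -scalerAr ec_rel frobq_Z scalerBr.
Qed.

Lemma ac0 N : ac N 0 = N.
Proof.
rewrite /ac -[RHS]coefK poly_def; apply: eq_bigr => i _; by rewrite ec_i0.
Qed.

Lemma ac_top N : ac N (size N).-1 = (lead_coef N)%:P.
Proof.
rewrite /ac /lead_coef; case E: (size N) => [|n].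
  by move/eqP: E; rewrite size_poly_eq0 big_ord0 => /eqP ->; rewrite coef0.
rewrite big_ord_recr /= ec_ii alg_polyC big1 ?add0r // => i _.
by rewrite ec_gt ?scaler0.
Qed.

Lemma q_gt0 : (0 < q)%N. Proof. exact: ltn_trans (q_gt1 F). Qed.

Definition Lp j : {poly F} := \prod_(k < j) ('X^(q ^ k.+1) - 'X).

Lemma Lp_S j : Lp j.+1 = Lp j * ('X^(q ^ j.+1) - 'X).
Proof. by rewrite /Lp big_ord_recr. Qed.

Lemma wieferich_crit (P : {poly F}) :
  P \is monic -> (2 <= size P)%N ->
  (forall k, (0 < k < (size P).-1)%N -> coprimep P ('X^(q ^ k) - 'X)) ->
  (P ^+ 2 %| carlitz (P - 1) 1) = (P %| Fseq F q (size P).-2).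
Proof.
move=> mP s2 cop.
have P0 : P != 0 by exact: monic_neq0.
set d := (size P).-1.
have sN : size (P - 1) = size P by rewrite size_polyDl // size_polyN size_polyC oner_neq0.
have lN : lead_coef (P - 1) = 1.
  by rewrite lead_coefDl ?(eqP mP) // size_polyN size_polyC oner_neq0.
pose u j := if j is 0 then P else ac (P - 1) j.
have u_rel j : ('X^(q ^ j.+1) - 'X) * u j.+1 = u j ^+ q - u j.
  rewrite /u ac_rel; case: j => [|j] //; rewrite ac0 frobq_B expr1n.
  by rewrite opprB addrA subrK.
have carlE : carlitz (P - 1) 1 = \sum_(j < d) u j.
  rewrite carlitzE sN -/d.
  have -> : size P = d.+1 by rewrite /d prednK // (ltn_trans _ s2).
  have hd : d = (size (P - 1)).-1 by rewrite sN.
  rewrite big_ord_recr /= [X in ac _ X]hd ac_top lN.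
  have [d' ->] : exists d', d = d'.+1.
    by exists d.-1; rewrite prednK // /d -ltnS prednK // (ltn_trans _ s2).
  rewrite big_ord_recl [RHS]big_ord_recl /= ac0.
  by rewrite polyC1; move: (\sum_(i < d') _) => S; ring.
pose b j := u j %/ P.
have qP : P ^+ q = P * P ^+ q.-1 by rewrite -exprS prednK // q_gt0.
have key j : (j < d)%N -> [/\ P %| u j, P %| b j * Lp j - (-1) ^+ j &
    P %| (\sum_(k < j.+1) b k) * Lp j - Fseq F q j].
  elim: j => [|j IH] jd.
    by rewrite /b /= divpp // big_ord1 /Lp big_ord0 /= divpp // !mulr1 subrr dvdp0.
  have [du dbl dsum] := IH (ltnW jd).
  pose D : {poly F} := 'X^(q ^ j.+1) - 'X.
  have eu : u j = b j * P by rewrite divpK.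
  have e2 : u j ^+ q - u j = P * (b j ^+ q * P ^+ q.-1 - b j).
    rewrite eu exprMn qP; move: (b j ^+ q) (P ^+ q.-1) => x y; ring.
  have du1 : P %| u j.+1.
    rewrite -(Gauss_dvdpl _ (cop j.+1 _)); last by rewrite /= jd.
    by rewrite mulrC u_rel e2 dvdp_mulr.
  have eu1 : u j.+1 = b j.+1 * P by rewrite divpK.
  have e3 : D * b j.+1 = b j ^+ q * P ^+ q.-1 - b j.
    apply: (mulIf P0); have := u_rel j; rewrite e2 eu1 -/D => e.
    by rewrite -mulrA e mulrC.
  have h1 : P %| b j.+1 * Lp j.+1 - (-1) ^+ j.+1.
    rewrite Lp_S -/D.
    have -> : b j.+1 * (Lp j * D) - (-1) ^+ j.+1 =
        Lp j * (D * b j.+1) + ((-1) ^+ j - 0) * 1.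
      rewrite exprS; move: (b j.+1) (Lp j) ((-1) ^+ j) => x y w; ring.
    rewrite e3.
    have -> : Lp j * (b j ^+ q * P ^+ q.-1 - b j) + ((-1) ^+ j - 0) * 1 =
        Lp j * b j ^+ q * P ^+ q.-1 - (b j * Lp j - (-1) ^+ j).
      move: (b j) (Lp j) (P ^+ q.-1) ((-1) ^+ j) => x y z w; ring.
    apply: dvdp_sub => //; apply: dvdp_mull; apply: dvdp_exp => //.
    by rewrite -ltnS prednK ?q_gt0 ?q_gt1.
  split => //.
  rewrite big_ord_recr /= Lp_S -/D /=.
  have -> : (\sum_(i < j.+1) b i + b j.+1) * (Lp j * D) -
      ((-1) ^+ j.+1 + D * Fseq F q j) =
      D * ((\sum_(k < j.+1) b k) * Lp j - Fseq F q j) +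
      (b j.+1 * (Lp j * D) - (-1) ^+ j.+1).
    move: (\sum_(i < j.+1) b i) (b j.+1) (Lp j) (Fseq F q j) ((-1) ^+ j.+1)
      => x y z v t; ring.
  by apply: dvdp_add; [apply: dvdp_mull | rewrite -Lp_S].
have d0 : (0 < d)%N by rewrite /d -ltnS prednK // (ltn_trans _ s2).
have carlE2 : carlitz (P - 1) 1 = P * \sum_(k < d) b k.
  rewrite carlE mulr_sumr; apply: eq_bigr => k _.
  by have [dk _ _] := key k (ltn_ord k); rewrite mulrC divpK.
rewrite carlE2 expr2 dvdp_mul2l //.
have [_ _ hs] : _ := key d.-1 ltac:(by rewrite prednK).
rewrite prednK // in hs.
have copL j : (j < d)%N -> coprimep P (Lp j).
  elim: j => [|j IH] jd; first by rewrite /Lp big_ord0 coprimep1.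
  rewrite Lp_S coprimepMr IH ?(ltnW jd) //=; apply: cop; by rewrite /= jd.
rewrite -(Gauss_dvdpl _ (copL d.-1 _)); last by rewrite prednK.
by rewrite -[_ * Lp _](subrK (Fseq F q d.-1)) dvdp_addr.
Qed.

End Wief.

Section FieldPart.
Variable F : finFieldType.
Variable L : fieldExtType F.
Local Notation q := #|F|.
Local Notation "p ^L" := (map_poly (in_alg L) p) (at level 2, format "p ^L").

Lemma pcharL : [pchar L] =i [pchar F].
Proof. exact: pchar_lalg. Qed.
Lemma pcharLX : [pchar {poly L}] =i [pchar F].
Proof. by move=> x; rewrite pchar_poly pcharL. Qed.

Lemma frobLD k (x y : L) : (x + y) ^+ (q ^ k) = x ^+ (q ^ k) + y ^+ (q ^ k).
Proof. exact: frobD pcharL k x y. Qed.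
Lemma frobLB k (x y : L) : (x - y) ^+ (q ^ k) = x ^+ (q ^ k) - y ^+ (q ^ k).
Proof. exact: frobB pcharL k x y. Qed.
Lemma frobLN k (x : L) : (- x) ^+ (q ^ k) = - x ^+ (q ^ k).
Proof. exact: frobN pcharL k x. Qed.
Lemma frobL_sum k I (r : seq I) (G : I -> L) :
  (\sum_(i <- r) G i) ^+ (q ^ k) = \sum_(i <- r) G i ^+ (q ^ k).
Proof. exact: (@frob_sum F _ pcharL k I r xpredT G). Qed.
Lemma frobLA k (c : F) : (c%:A : L) ^+ (q ^ k) = c%:A.
Proof. by rewrite -in_algE -rmorphXn frobF. Qed.

Lemma q_pos k : (0 < q ^ k)%N.
Proof. by rewrite expn_gt0 q_gt0. Qed.

Lemma frobL_eq0 k (x : L) : (x ^+ (q ^ k) == 0) = (x == 0).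
Proof. by rewrite expf_eq0 q_pos. Qed.

Lemma frobL_inj k (x y : L) : x ^+ (q ^ k) = y ^+ (q ^ k) -> x = y.
Proof. by move/eqP; rewrite -subr_eq0 -frobLB frobL_eq0 subr_eq0 => /eqP. Qed.

Lemma frobL_horner k (g : {poly F}) (x : L) :
  (g^L.[x]) ^+ (q ^ k) = g^L.[x ^+ (q ^ k)].
Proof.
rewrite !horner_coef frobL_sum size_map_poly; apply: eq_bigr => i _.
by rewrite exprMn coef_map /= frobLA -!exprM mulnC.
Qed.

Lemma mem1_frob (x : L) : (x \in 1%VS) = (x ^+ q == x).
Proof. by rewrite (Fermat's_little_theorem 1%AS) /= dimv1 expn1. Qed.

Lemma adj_frob (x : L) : x ^+ (q ^ adjoin_degree 1%VS x) = x.
Proof.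
have := Fermat's_little_theorem <<1; x>>%AS x.
by rewrite memv_adjoin /= dim_Fadjoin dimv1 muln1 => /esym/eqP.
Qed.


Variable s : nat.
Hypothesis hL : \dim {:L} = s.
Hypothesis hs : (0 < s)%N.

Lemma card_finL : #|finvect_type L| = (q ^ s)%N.
Proof.
rewrite -hL -(@card_vspacef F (finvect_type L) (Vector.class (finvect_type L))).
exact: card_vspace.
Qed.

Lemma size_enum_finL : size (enum (finvect_type L)) = (q ^ s)%N.
Proof. by rewrite -cardE card_finL. Qed.

Lemma frob_full (x : L) : x ^+ (q ^ s) = x.
Proof. by have := expf_card (x : finvect_type L); rewrite card_finL. Qed.

Lemma adj_le (x : L) : (adjoin_degree 1%VS x <= s)%N.
Proof.
have := dimvS (subvf <<1; x>>%VS); rewrite dim_Fadjoin dimv1 muln1 hL //.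
Qed.

Lemma dvd_root (P g : {poly F}) (x : L) :
  irreducible_poly P -> root P^L x -> root g^L x -> P %| g.
Proof.
move=> iP rP rg; apply: contraTT rg => nd.
rewrite -(irreducible_poly_coprime _ iP) in nd.
rewrite -(coprimep_map (in_alg L)) in nd.
by rewrite /root (coprimep_root nd rP).
Qed.

Lemma adj_irr (P : {poly F}) (x : L) :
  P \is monic -> irreducible_poly P -> root P^L x ->
  adjoin_degree 1%VS x = (size P).-1.
Proof.
move=> mP iP rP.
have d1 : minPoly 1%AS x %| P^L.
  by apply: minPoly_dvdp => //; apply: alg_polyOver.
have [m0 em0] := polyOver1P (minPolyOver 1%AS x).
have P0 : P^L != 0 by rewrite map_poly_eq0 monic_neq0.
have s1 := dvdp_leq P0 d1; rewrite size_map_poly size_minPoly in s1.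
have m00 : m0 != 0.
  by apply: contraTneq (monic_minPoly 1%AS x) => m00; rewrite em0 m00 map_poly0 monicE lead_coef0 eq_sym oner_eq0.
have d2 : P %| m0 by apply: (@dvd_root P m0 x iP rP); rewrite -em0 root_minPoly.
have s2 := dvdp_leq m00 d2.
have : size m0 = (adjoin_degree 1%VS x).+1 by rewrite -size_minPoly em0 size_map_poly.
move=> e; rewrite e in s2.
have -> : size P = (adjoin_degree 1%VS x).+1 by apply/eqP; rewrite eqn_leq s2 s1.
by [].
Qed.


Lemma q_gt1' : (1 < q)%N. Proof. exact: q_gt1. Qed.

Lemma size_XnX n : (1 < n)%N -> size ('X^n - 'X : {poly L}) = n.+1.
Proof.
by move=> n1; rewrite size_polyDl ?size_polyXn // size_polyN size_polyX ltnS.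
Qed.

Lemma frob_neq (x : L) j :
  adjoin_degree 1%VS x = s -> (0 < j < s)%N -> x ^+ (q ^ j) != x.
Proof.
move=> ad /andP[j0 js]; apply/negP => /eqP ex.
have full : <<1; x>>%VS = fullv.
  by apply/eqP; rewrite eqEdim subvf /= dim_Fadjoin dimv1 muln1 ad hL leqnn.
have all_y (y : L) : y ^+ (q ^ j) = y.
  have : y \in <<1; x>>%VS by rewrite full memvf.
  by case/Fadjoin1_polyP => g ->; rewrite frobL_horner ex.
have qj1 : (1 < q ^ j)%N by rewrite -(expn0 q) ltn_exp2l ?q_gt1.
have p0 : ('X^(q ^ j) - 'X : {poly L}) != 0.
  by rewrite -size_poly_gt0 size_XnX.
have := max_poly_roots p0 (rs := enum (finvect_type L)) _ (enum_uniq _).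
rewrite size_XnX // -cardE card_finL ltnS leqNgt ltn_exp2l ?q_gt1 // js.
have hall : all (root ('X^(q ^ j) - 'X)) (enum (finvect_type L)).
  by apply/allP => y _; rewrite /root !hornerE all_y subrr.
by move/(_ hall).
Qed.

Lemma split_roots (p : {poly L}) (rs : seq L) :
  p \is monic -> size p = (size rs).+1 -> uniq rs -> all (root p) rs ->
  p = \prod_(r <- rs) ('X - r%:P).
Proof.
move=> mp sp ur ar.
have [q0 e] := uniq_roots_prod_XsubC ar ltac:(by rewrite uniq_rootsE).
have d : \prod_(r <- rs) ('X - r%:P) %| p by rewrite e dvdp_mull.
apply/eqP; rewrite -eqp_monic ?monic_prod_XsubC // eqp_sym -dvdp_size_eqp //.
by rewrite size_prod_XsubC sp.
Qed.

Lemma root_dvd_prod (p : {poly L}) (rs : seq L) :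
  (1 < size p)%N -> p %| \prod_(r <- rs) ('X - r%:P) ->
  exists2 r, r \in rs & root p r.
Proof.
move=> sp /dvdp_prod_XsubC [m hm].
case E: (mask m rs) hm => [|r rs'] hm.
  by move: hm; rewrite big_nil => /eqp_size; move: sp; rewrite size_poly1 => /[swap] ->.
exists r; first by apply: (mem_mask (m := m)); rewrite E mem_head.
by rewrite (eqp_root hm) root_prod_XsubC mem_head.
Qed.

Lemma root_exists (P : {poly F}) :
  P \is monic -> irreducible_poly P -> size P = s.+1 ->
  exists x : L, root P^L x.
Proof.
move=> mP iP sP.
pose mi : monic_irreducible_poly P := (iP, mP).
have dv : P %| 'X^(q ^ s) - 'X.
  have e : in_qpoly P ('X^(q ^ s) - 'X) = 0 :> {poly %/ P with mi}.
    rewrite rmorphB rmorphXn /=.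
    have := expf_card (in_qpoly P 'X : {poly %/ P with mi}).
    by rewrite card_qfpoly sP /= => ->; rewrite subrr.
  rewrite dvdpE /Pdiv.Ring.rdvdp -(mk_monicE mi).
  by move/(congr1 val): e => /= ->.
have dvL : P^L %| \prod_(r <- enum (finvect_type L)) ('X - r%:P).
  have := finField_genPoly (finvect_type L); rewrite card_finL big_enum /= => <-.
  by rewrite -(dvdp_map (in_alg L)) rmorphB rmorphXn /= map_polyX in dv.
have [|r _ rr] := root_dvd_prod _ _ _ dvL; last by exists r.
by rewrite size_map_poly sP ltnS hs.
Qed.


Lemma conj_split (P : {poly F}) (x : L) :
  P \is monic -> irreducible_poly P -> size P = s.+1 -> root P^L x ->
  P^L = \prod_(r <- [seq x ^+ (q ^ j) | j <- iota 0 s]) ('X - r%:P).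
Proof.
move=> mP iP sP rx.
have ad : adjoin_degree 1%VS x = s by rewrite (@adj_irr P x mP iP rx) sP.
apply: split_roots.
- by rewrite map_monic.
- by rewrite size_map_poly sP size_map size_iota.
- rewrite map_inj_in_uniq ?iota_uniq // => i j; rewrite !mem_iota /= !add0n => is' js e.
  have H a b : (a < b < s)%N -> x ^+ (q ^ a) = x ^+ (q ^ b) -> False.
    move=> /andP[ab bs] eab.
    have e1 : x ^+ (q ^ (b - a)) = x.
      apply: (@frobL_inj a); rewrite -exprM -expnD subnK; [by rewrite eab | exact: ltnW].
    have hj : (0 < b - a < s)%N.
      by rewrite subn_gt0 ab /= (leq_ltn_trans (leq_subr _ _) bs).
    by have := @frob_neq x (b - a) ad hj; rewrite e1 eqxx.
  case: (ltngtP i j) => // [ij|ji]; exfalso.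
    by apply: (H i j); [rewrite ij js | exact: e].
  by apply: (H j i); [rewrite ji is' | rewrite e].
- apply/allP => _ /mapP [j _ ->].
  by rewrite /root -frobL_horner (rootP rx) expr0n eqn0Ngt q_pos.
Qed.



Lemma trans_split (y : L) :
  'X^q - 'X - (y ^+ q - y)%:P =
    \prod_(r <- [seq y + c%:A | c <- enum F]) ('X - r%:P).
Proof.
have s2 : size (- 'X - (y ^+ q - y)%:P) = 2.
  by rewrite -opprD size_polyN size_XaddC.
apply: split_roots.
- by rewrite -addrA monicE lead_coefDl ?lead_coefXn // s2 size_polyXn ltnS q_gt1.
- rewrite size_map -cardE -addrA size_polyDl ?size_polyXn // s2 ltnS q_gt1 //.
- rewrite map_inj_uniq ?enum_uniq // => a b /addrI; rewrite -!in_algE; exact: fmorph_inj.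
- apply/allP => _ /mapP [c _ ->].
  have := frobLD 1 y (c%:A); have := frobLA 1 c; rewrite expn1 => e1 e2.
  rewrite /root !hornerE e2 e1; apply/eqP.
  move: (y ^+ q) => z; ring.
Qed.


Lemma trace_nonzero : exists u : L, \sum_(i < s) u ^+ (q ^ i) != 0.
Proof.
case: (pickP (fun u : finvect_type L => \sum_(i < s) u ^+ (q ^ i) != 0)) => [u hu|none].
  by exists u.
exfalso.
have [s' es] : exists s', s = s'.+1 by exists s.-1; rewrite prednK.
pose tp : {poly L} := \sum_(i < s) 'X^(q ^ i).
have stp : size tp = (q ^ s').+1.
  rewrite /tp es big_ord_recr /= addrC size_polyDl size_polyXn //.
  rewrite ltnS; apply: (big_ind (fun p : {poly L} => size p <= q ^ s')%N).
  - by rewrite size_poly0.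
  - by move=> a b ha hb; rewrite (leq_trans (size_polyD _ _)) // geq_max ha hb.
  - by move=> i _; rewrite size_polyXn ltn_exp2l ?q_gt1.
have tp0 : tp != 0 by rewrite -size_poly_gt0 stp.
have hall : all (root tp) (enum (finvect_type L)).
  apply/allP => y _; rewrite /root /tp horner_sum.
  rewrite (eq_bigr (fun i : 'I_s => y ^+ (q ^ i))) => [|i _]; last by rewrite hornerXn.
  by have := none y; rewrite /= => /negbFE.
have := max_poly_roots tp0 hall (enum_uniq _).
by rewrite size_enum_finL stp es ltnS leqNgt ltn_exp2l ?q_gt1 // ltnSn.
Qed.


Lemma sum_shift (g : nat -> L) : g s = g 0 ->
  \sum_(i < s) g i.+1 = \sum_(i < s) g i.
Proof.
move=> gs; have [s' es] : exists s', s = s'.+1 by exists s.-1; rewrite prednK.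
rewrite es in gs *; rewrite big_ord_recr [RHS]big_ord_recl /= gs addrC.
by congr (_ + _); apply: eq_bigr => i _.
Qed.

Lemma frobq_L (x : L) k : (x ^+ (q ^ k)) ^+ q = x ^+ (q ^ k.+1).
Proof. by rewrite -exprM expnSr. Qed.

Lemma hilbert90 (b : L) : \sum_(i < s) b ^+ (q ^ i) = 0 -> exists t : L, t ^+ q - t = b.
Proof.
move=> trb.
have [u Tu] := trace_nonzero.
set T := \sum_(i < s) u ^+ (q ^ i) in Tu.
pose S i := \sum_(j < i) b ^+ (q ^ j).
have S0 : S 0 = 0 by rewrite /S big_ord0.
have SS i : S i.+1 = b + S i ^+ q.
  have := frobL_sum 1 _ (index_enum 'I_i) (fun j => b ^+ (q ^ j)); rewrite expn1 => ->.
  rewrite /S big_ord_recl expn0 expr1; congr (_ + _); apply: eq_bigr => j _.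
  by rewrite frobq_L.
have Tq : T ^+ q = T.
  have := frobL_sum 1 _ (index_enum 'I_s) (fun j => u ^+ (q ^ j)); rewrite expn1 => ->.
  rewrite /T -(sum_shift (fun i => u ^+ (q ^ i))) ?frob_full ?expn0 ?expr1 //.
  by apply: eq_bigr => i _; rewrite frobq_L.
pose th := \sum_(i < s) S i * u ^+ (q ^ i).
have key : th ^+ q - th = - (b * T).
  have := frobL_sum 1 _ (index_enum 'I_s) (fun i => S i * u ^+ (q ^ i)); rewrite expn1 => ->.
  have -> : \sum_(i < s) (S i * u ^+ (q ^ i)) ^+ q =
      \sum_(i < s) S i.+1 * u ^+ (q ^ i.+1) - b * \sum_(i < s) u ^+ (q ^ i.+1).
    rewrite mulr_sumr -sumrB; apply: eq_bigr => i _.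
    by rewrite exprMn frobq_L SS; ring.
  rewrite (sum_shift (fun i => S i * u ^+ (q ^ i))); last by rewrite [S s]trb S0 !mul0r.
  rewrite (sum_shift (fun i => u ^+ (q ^ i))) ?frob_full ?expn0 ?expr1 //.
  rewrite -/th -/T; ring.
exists (- th / T).
have := frobLN 1 th; rewrite expn1 => eN.
rewrite exprMn exprVn eN Tq.
have -> : - th ^+ q / T - - th / T = - (th ^+ q - th) / T by ring.
by rewrite key; field.
Qed.

Lemma Fseq_map i : (Fseq F q i)^L = Fseq L q i.
Proof.
elim: i => [|i IH] /=; first by rewrite rmorph1.
rewrite rmorphD rmorphM rmorphB /= map_polyXn map_polyX IH rmorphXn rmorphN rmorph1.
by [].
Qed.

Lemma Fseq_trans i (x : L) (c : F) : (Fseq L q i).[x + c%:A] = (Fseq L q i).[x].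
Proof.
elim: i => [|i IH] /=; first by rewrite !hornerE.
rewrite !hornerE IH frobLD frobLA; congr (_ + _ * _).
by rewrite opprD addrACA subrr addr0.
Qed.

Lemma uniq_trans (y : L) : uniq [seq y + c%:A | c <- enum F].
Proof. by rewrite map_inj_uniq ?enum_uniq // => a b /addrI; rewrite -!in_algE; exact: fmorph_inj. Qed.

Lemma comp_prod (rs : seq L) (Q : {poly L}) :
  (\prod_(r <- rs) ('X - r%:P)) \Po Q = \prod_(r <- rs) (Q - r%:P).
Proof.
elim: rs => [|r rs IH]; first by rewrite !big_nil -polyC1 comp_polyC.
by rewrite !big_cons comp_polyM comp_polyB comp_polyX comp_polyC IH.
Qed.

Lemma prod_shift (g : nat -> {poly L}) : g s = g 0 ->
  \prod_(i < s) g i.+1 = \prod_(i < s) g i.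
Proof.
move=> gs; have [s' es] : exists s', s = s'.+1 by exists s.-1; rewrite prednK.
rewrite es in gs *; rewrite big_ord_recr [RHS]big_ord_recl /= gs mulrC.
by congr (_ * _); apply: eq_bigr => i _.
Qed.

Lemma size_lt_eq0 (R : nzRingType) (p : {poly R}) n : (size p <= n.+1)%N -> p`_n = 0 -> (size p <= n)%N.
Proof.
move=> sp pn; rewrite leqNgt; apply/negP => lt.
have e : size p = n.+1 by apply/eqP; rewrite eqn_leq sp lt.
have : lead_coef p = 0 by rewrite /lead_coef e.
by move/eqP; rewrite lead_coef_eq0 => /eqP p0; move: e; rewrite p0 size_poly0.
Qed.

Lemma wief_s (P : {poly F}) : P \is monic -> irreducible_poly P -> size P = s.+1 ->
  (P ^+ 2 %| carlitz (P - 1) 1) = (P %| Fseq F q s.-1).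
Proof.
move=> mP iP sP.
have [x rx] := @root_exists P mP iP sP.
have ad : adjoin_degree 1%VS x = s by rewrite (@adj_irr P x mP iP rx) sP.
have -> : s.-1 = (size P).-2 by rewrite sP.
apply: wieferich_crit => //; first by rewrite sP ltnS.
move=> k; rewrite sP /= => hk.
rewrite (irreducible_poly_coprime _ iP); apply/negP => dk.
have : root ('X^(q ^ k) - 'X)^L x.
  by apply: root_dvdp rx; rewrite dvdp_map.
rewrite /root rmorphB rmorphXn /= map_polyX !hornerE subr_eq0.
by apply/negP: (@frob_neq x k ad hk).
Qed.

Lemma trans_split2 (y : L) :
  'X^q - 'X - (y ^+ q - y)%:P = \prod_(c : F) ('X - (y + c%:A)%:P).
Proof. by rewrite trans_split big_map big_enum. Qed.

Lemma frob_sub_shift (x : L) i : (x ^+ q - x) ^+ (q ^ i) = x ^+ (q ^ i.+1) - x ^+ (q ^ i).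
Proof. by rewrite frobLB -exprM -expnS. Qed.

Lemma forward (P : {poly F}) :
  P \is monic -> irreducible_poly P -> size P = s.+1 ->
  P %| Fseq F q s.-1 -> non_fixed P ->
  exists alpha : L, [/\ adjoin_degree 1%VS alpha = s, trace_q q s alpha = 0,
    ('X ^+ q - 'X - alpha%:P) %| Fseq L q s.-1 &
    exists R0 : {poly F}, R0^L = Rpoly q s alpha /\ P %| R0].
Proof.
move=> mP iP sP dF nf.
have [x rx] := @root_exists P mP iP sP.
have ad : adjoin_degree 1%VS x = s by rewrite (@adj_irr P x mP iP rx) sP.
have fx : (Fseq L q s.-1).[x] = 0.
  by rewrite -Fseq_map; apply/rootP; apply: root_dvdp rx; rewrite dvdp_map.
exists (x ^+ q - x); split.
- set a := x ^+ q - x.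
  have e_le := adj_le a.
  have e_pos : (0 < adjoin_degree 1%VS a)%N by rewrite /adjoin_degree.
  case: (ltngtP (adjoin_degree 1%VS a) s) => [lt|gt|//]; last by rewrite ltnNge e_le in gt.
  exfalso; set e := adjoin_degree 1%VS a in e_le e_pos lt.
  have fa : a ^+ (q ^ e) = a := adj_frob a.
  set y := x ^+ (q ^ e) - x.
  have yq : y ^+ q = y.
    apply/eqP; rewrite -subr_eq0; apply/eqP.
    have -> : y ^+ q - y = a ^+ (q ^ e) - a.
      have := frobLB 1 (x ^+ (q ^ e)) x; rewrite expn1 => ->.
      rewrite /a frobLB -!exprM [(q ^ e * q)%N]mulnC.
      rewrite /y.
      move: (x ^+ (q * q ^ e)) (x ^+ (q ^ e)) (x ^+ q) => z1 z2 z3; ring.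
    by rewrite fa subrr.
  have : y \in 1%VS by rewrite mem1_frob yq.
  case/vlineP => c yc.
  have xe : x ^+ (q ^ e) = x + c%:A by rewrite -yc /y addrC subrK.
  have Pc : P \Po ('X + c%:P) = P.
    apply/eqP; rewrite -subr_eq0; apply/eqP.
    set Q := _ - P.
    have rQ : root Q^L x.
      rewrite /Q rmorphB /= map_comp_poly rmorphD /= map_polyX map_polyC /=.
      rewrite /root !hornerE horner_comp !hornerE -xe -frobL_horner (rootP rx).
      by rewrite expr0n gtn_eqF ?q_pos // subrr.
    have sc : size (P \Po ('X + c%:P)) = s.+1 by rewrite size_comp_poly2 ?size_XaddC.
    have sQ : (size Q <= s)%N.
      apply: size_lt_eq0.
        by rewrite /Q (leq_trans (size_polyD _ _)) // size_polyN sc sP maxnn.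
      rewrite /Q coefB.
      have -> : (P \Po ('X + c%:P))`_s = lead_coef (P \Po ('X + c%:P)) by rewrite /lead_coef sc.
      have -> : P`_s = lead_coef P by rewrite /lead_coef sP.
      rewrite lead_coef_comp ?size_XaddC // (eqP mP) lead_coefXaddC expr1n mulr1.
      by rewrite subrr.
    apply/eqP; apply: contraTT sQ => Q0.
    have := dvdp_leq Q0 (@dvd_root P Q x iP rx rQ).
    by rewrite sP -ltnNge.
  have c0 := nf c Pc.
  move: xe; rewrite c0 scale0r addr0 => xe.
  by have := @frob_neq x e ad; rewrite xe eqxx e_pos lt => /(_ isT).
- rewrite /trace_q.
  under eq_bigr do rewrite frob_sub_shift.
  rewrite sumrB (sum_shift (fun i => x ^+ (q ^ i))) ?subrr //.
  by rewrite frob_full expn0 expr1.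
- rewrite trans_split; apply: uniq_roots_dvdp.
    by apply/allP => _ /mapP [c _ ->]; rewrite /root Fseq_trans fx.
  by rewrite uniq_rootsE uniq_trans.
exists (\prod_(c : F) (P \Po ('X - c%:P))); split; last first.
  rewrite (bigD1 0) //= polyC0 subr0 comp_polyXr; exact: dvdp_mulr.
rewrite rmorph_prod /=.
under eq_bigr => c _ do rewrite map_comp_poly rmorphB /= map_polyX map_polyC /= (@conj_split P x mP iP sP rx) comp_prod.
rewrite exchange_big /= big_map.
have ei : iota 0 s = index_iota 0 s by rewrite /index_iota subn0.
under eq_bigr => j _.
  under eq_bigr => c _ do rewrite -addrA -opprD -polyCD [_%:A + _]addrC.
  rewrite -trans_split2.
  rewrite frobq_L -frob_sub_shift.
  over.
rewrite /Rpoly big_add1 /= big_mkord ei big_mkord.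
rewrite (prod_shift (fun i => 'X^q - 'X - ((x ^+ q - x) ^+ (q ^ i))%:P)) //.
by rewrite frob_full expn0 expr1.
Qed.

Lemma frob_comm (x : L) a b : (x ^+ (q ^ a)) ^+ (q ^ b) = (x ^+ (q ^ b)) ^+ (q ^ a).
Proof. by rewrite -!exprM mulnC. Qed.

Lemma backward (P : {poly F}) (alpha : L) :
  P \is monic -> irreducible_poly P ->
  adjoin_degree 1%VS alpha = s -> trace_q q s alpha = 0 ->
  ('X ^+ q - 'X - alpha%:P) %| Fseq L q s.-1 ->
  forall R0 : {poly F}, R0^L = Rpoly q s alpha -> P %| R0 ->
  [/\ size P = s.+1, P %| Fseq F q s.-1 & non_fixed P].
Proof.
move=> mP iP ad tr dv R0 eR dR.
have trs i : \sum_(j < s) (alpha ^+ (q ^ i)) ^+ (q ^ j) = 0.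
  under eq_bigr do rewrite frob_comm.
  by rewrite -frobL_sum [\sum_(j < s) _]tr expr0n gtn_eqF ?q_pos.
have ex i : exists t : L, t ^+ q - t == alpha ^+ (q ^ i).
  by have [t ht] := @hilbert90 _ (trs i); exists t; rewrite ht.
pose th i := xchoose (ex i).
have thE i : th i ^+ q - th i = alpha ^+ (q ^ i) by apply/eqP; exact: xchooseP (ex i).
pose rs := [seq th i + c%:A | i <- iota 1 s, c <- enum F].
have eRp : Rpoly q s alpha = \prod_(r <- rs) ('X - r%:P).
  rewrite big_allpairs_dep /Rpoly /index_iota subSS subn0.
  by apply: eq_bigr => i _; rewrite -thE trans_split big_map.
have [r rin rr] : exists2 r, r \in rs & root P^L r.
  apply: root_dvd_prod; last by rewrite -eRp -eR dvdp_map.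
  by rewrite size_map_poly; case: iP.
case/allpairsPdep: rin => i [c [ii _ er]].
rewrite mem_iota add1n in ii; case/andP: ii => i1 is1.
have rq : r ^+ q - r = alpha ^+ (q ^ i).
  have := frobLD 1 (th i) (c%:A); have := frobLA 1 c; rewrite expn1 => e1 e2.
  rewrite er e2 e1 -thE; move: (th i ^+ q) => z; ring.
have back : alpha = (r ^+ q - r) ^+ (q ^ (s - i)).
  by rewrite rq frob_iter subnKC ?frob_full // -ltnS.
have adr := @adj_irr P r mP iP rr.
have le1 := adj_le r.
have ge : (s <= adjoin_degree 1%VS r)%N.
  have amem : alpha \in <<1; r>>%VS.
    apply/Fadjoin1_polyP; exists (('X ^+ q - 'X) ^+ (q ^ (s - i))).
    by rewrite rmorphXn rmorphB /= map_polyXn map_polyX !hornerE back.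
  have sub : (<<1; alpha>>%AS <= <<1; r>>%AS)%VS.
    by apply/FadjoinP; split; [exact: sub1v | exact: amem].
  by have := dimvS sub; rewrite /= !dim_Fadjoin dimv1 !muln1 ad.
have sP : size P = s.+1.
  have e : (size P).-1 = s by rewrite -adr; apply/eqP; rewrite eqn_leq le1 ge.
  by rewrite -e prednK // size_poly_gt0 monic_neq0.
split => //.
- apply: (@dvd_root P _ r iP rr); rewrite Fseq_map /root.
  set k := (s - i)%N.
  have eta : root ('X ^+ q - 'X - alpha%:P) (r ^+ (q ^ k)).
    by rewrite /root !hornerE back frobLB -!exprM [(q ^ k * q)%N]mulnC subrr.
  have := root_dvdp dv eta; rewrite /root -Fseq_map -frobL_horner.
  by rewrite frobL_eq0.
move=> a Pa; apply/eqP; apply: contraT => a0.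
have rra : root P^L (r + a%:A).
  move: rr; rewrite -{1}Pa /root map_comp_poly rmorphD /= map_polyX map_polyC /=.
  by rewrite horner_comp !hornerE.
rewrite (@conj_split P r mP iP sP rr) root_prod_XsubC in rra.
case/mapP: rra => j; rewrite mem_iota add0n => /andP[_ js] ej.
have j0 : (0 < j)%N.
  rewrite lt0n; apply: contra a0 => /eqP j0; move: ej; rewrite j0 expn0 expr1.
  move/eqP; rewrite -subr_eq0 addrC addKr.
  by rewrite -in_algE fmorph_eq0.
set g := r ^+ q - r.
have gj : g ^+ (q ^ j) = g.
  rewrite /g frobLB -exprM mulnC exprM -ej.
  have := frobLD 1 r (a%:A); have := frobLA 1 a; rewrite expn1 => e1 ->; rewrite e1.
  move: (r ^+ q) => z; ring.
have aj : alpha ^+ (q ^ j) = alpha by rewrite back frob_comm gj.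
by have := @frob_neq alpha j ad; rewrite aj eqxx j0 js => /(_ isT).
Qed.

End FieldPart.

Theorem theorem3p4 (F : finFieldType) (L : fieldExtType F) (s : nat)
  (hq : (3 <= #|F|)%N) (hs : (1 <= s)%N) (hL : \dim {:L} = s)
  (P : {poly F}) :
  (c_wieferich P /\ non_fixed P /\ size P = s.+1) <->
  ([/\ P \is monic, irreducible_poly P &
    exists alpha : L,
      [/\ adjoin_degree 1%VS alpha = s,
          trace_q #|F| s alpha = 0,
          ('X ^+ #|F| - 'X - alpha%:P) %| Fseq L #|F| s.-1 &
          exists R0 : {poly F},
            map_poly (in_alg L) R0 = Rpoly #|F| s alpha /\ P %| R0]]).
Proof.
split.
- case=> [[mP iP W] [nf sP]].
  have dF : P %| Fseq F #|F| s.-1 by rewrite -(@wief_s F L s hL hs P mP iP sP).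
  split => //; exact: (@forward F L s hL hs P mP iP sP dF nf).
- case=> mP iP [alpha [ad tr dv [R0 [eR dR]]]].
  have [sP dF nf] := @backward F L s hL hs P alpha mP iP ad tr dv R0 eR dR.
  split => //; split => //.
  by rewrite (@wief_s F L s hL hs P mP iP sP).
Qed.
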